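(* Let $K$ be a spherically complete valued field and $d\ge 1$. Then every nested family $\{C_i\}_{i\in I}$ of nonempty convex subsets of $K^d$ (i.e. for all $i,j$, $C_i\subseteq C_j$ or $C_j\subseteq C_i$) has nonempty intersection.
   Context: $K$ is a field with valuation $\nu:K\to\Gamma\cup\{\infty\}$, valuation ring $\mathcal{O}$. A ball in $K$ is a set $\{x:\nu(x-c)\ge r\}$ or $\{x:\nu(x-c)>r\}$ with $c\in K$, $r\in\Gamma$. $K$ is spherically complete if every nested family of balls in $K$ has nonempty intersection. A set $X\subseteq K^d$ is convex if it is closed under combinations $\sum_{i=1}^n\alpha_ix_i$ with $x_i\in X$, $\alpha_i\in\mathcal{O}$, $\sum\alpha_i=1$. *)

(* Defs.v *)
From mathcomp Require Import all_boot all_order all_algebra.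
Set Implicit Arguments. Unset Strict Implicit. Unset Printing Implicit Defensive.
Import GRing.Theory.
Local Open Scope ring_scope.

(* The value group Gamma is a Z-module with an explicit order relation [le];
   the value infinity is represented by [None] in [option Gamma]. *)
Section Valued.
Variables (K : fieldType) (G : zmodType) (le : rel G) (nu : K -> option G).

Definition ole (a b : option G) : bool :=
  match a, b with
  | _, None => true
  | None, Some _ => false
  | Some x, Some y => le x y
  end.
Definition olt (a b : option G) : bool := ole a b && ~~ ole b a.

Definition oadd (a b : option G) : option G :=
  match a, b with
  | Some x, Some y => Some (x + y)
  | _, _ => None
  end.

Record is_valuation : Prop := {
  le_refl : forall a, le a a;
  le_anti : forall a b, le a b -> le b a -> a = b;
  le_trans : forall a b c, le a b -> le b c -> le a c;
  le_total : forall a b, le a b || le b a;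
  le_add : forall a b c, le a b -> le (a + c) (b + c);
  nu_inf : forall x, nu x = None <-> x = 0;
  nu_mul : forall x y, nu (x * y) = oadd (nu x) (nu y);
  nu_add : forall x y, ole (nu x) (nu (x + y)) || ole (nu y) (nu (x + y));
  nu_surj : forall g : G, exists x, nu x = Some g
}.

Definition in_O (a : K) : Prop := ole (Some 0) (nu a).

Definition closed_ball (c : K) (r : G) : K -> Prop :=
  fun x => ole (Some r) (nu (x - c)).
Definition open_ball (c : K) (r : G) : K -> Prop :=
  fun x => olt (Some r) (nu (x - c)).
Definition is_ball (B : K -> Prop) : Prop :=
  exists (c : K) (r : G),
    (forall x, B x <-> closed_ball c r x) \/ (forall x, B x <-> open_ball c r x).

Definition subset_of {T : Type} (A B : T -> Prop) : Prop := forall x, A x -> B x.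

Definition nested {I T : Type} (F : I -> T -> Prop) : Prop :=
  forall i j, subset_of (F i) (F j) \/ subset_of (F j) (F i).

Definition spherically_complete : Prop :=
  forall (I : Type) (B : I -> K -> Prop),
    (forall i, is_ball (B i)) -> nested B -> exists x, forall i, B i x.

Definition convex (d : nat) (X : 'rV[K]_d -> Prop) : Prop :=
  forall (n : nat) (x : 'I_n -> 'rV[K]_d) (alpha : 'I_n -> K),
    (forall i, X (x i)) -> (forall i, in_O (alpha i)) ->
    \sum_(i < n) alpha i = 1 ->
    X (\sum_(i < n) alpha i *: x i).

End Valued.

(* Main.v *)
Require Import Defs.
From mathcomp Require Import all_boot all_order all_algebra ring.
From Stdlib Require Import Classical.
Set Implicit Arguments. Unset Strict Implicit. Unset Printing Implicit Defensive.
Import GRing.Theory.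
Local Open Scope ring_scope.

Section S.
Variables (K : fieldType) (G : zmodType) (le : rel G) (nu : K -> option G).
Hypothesis Hnu : is_valuation le nu.

Lemma ole_trans a b c : ole le a b -> ole le b c -> ole le a c.
Proof.
case: a => [a|]; case: b => [b|]; case: c => [c|] //=.
exact: (le_trans Hnu).
Qed.

Lemma ole_None a : ole le a None.
Proof. by case: a. Qed.

Lemma nu1 : nu 1 = Some 0.
Proof.
have := nu_mul Hnu 1 1; rewrite mulr1.
case E: (nu 1) => [g|] /=.
  move=> [] h; have: g + g - g = g - g by rewrite -h.
  by rewrite addrK subrr => ->.
by move: E => /(nu_inf Hnu) /eqP; rewrite oner_eq0.
Qed.

Lemma num1 : nu (-1) = Some 0.
Proof.
have := nu_mul Hnu (-1) (-1); rewrite mulrNN mulr1 nu1.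
case E: (nu (-1)) => [h|] /=; last first.
  by move: E => /(nu_inf Hnu) /eqP; rewrite oppr_eq0 oner_eq0.
move=> [] hh.
have le0h : le 0 h.
  case/orP: (le_total Hnu 0 h) => // hle.
  by have := le_add Hnu h hle; rewrite -hh add0r.
have := le_add Hnu h le0h; rewrite -hh add0r => leh0.
by rewrite (le_anti Hnu leh0 le0h).
Qed.

Lemma nuN x : nu (- x) = nu x.
Proof.
rewrite -mulN1r (nu_mul Hnu) num1; case: (nu x) => //= g; by rewrite add0r.
Qed.

Lemma ultra r a b : ole le r (nu a) -> ole le r (nu b) -> ole le r (nu (a + b)).
Proof.
move=> ha hb; case/orP: (nu_add Hnu a b) => h; [exact: ole_trans ha h|exact: ole_trans hb h].
Qed.

Lemma inO1B a : in_O le nu a -> in_O le nu (1 - a).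
Proof.
rewrite /in_O => ha; apply: ultra; last by rewrite nuN.
by rewrite nu1 /= (le_refl Hnu).
Qed.

Lemma le_cancel g e : le g (e + g) -> le 0 e.
Proof.
move=> h; have := le_add Hnu (- g) h; by rewrite subrr addrK.
Qed.

Lemma ball_sub c r c' r' w : le r r' -> closed_ball le nu c r w ->
  closed_ball le nu c' r' w -> subset_of (closed_ball le nu c' r') (closed_ball le nu c r).
Proof.
rewrite /closed_ball => hr hw hw' x hx.
have -> : x - c = (x - c') + ((c' - w) + (w - c)) by ring.
have hr' : ole le (Some r) (Some r') by [].
apply: ultra; first exact: ole_trans hr' hx.
apply: ultra => //. rewrite -opprB nuN; exact: ole_trans hr' hw'.
Qed.

Lemma ball_nest c r c' r' w : closed_ball le nu c r w -> closed_ball le nu c' r' w ->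
  subset_of (closed_ball le nu c r) (closed_ball le nu c' r') \/
  subset_of (closed_ball le nu c' r') (closed_ball le nu c r).
Proof.
move=> h h'; case/orP: (le_total Hnu r r') => hr.
  by right; apply: ball_sub hr h h'.
by left; apply: ball_sub hr h' h.
Qed.

Lemma inO_of g e z : nu z = oadd e (Some g) -> ole le (Some g) (nu z) -> ole le (Some 0) e.
Proof.
case: e => [e|] //= -> /=; exact: le_cancel.
Qed.

Lemma core1 (Hsc : spherically_complete le nu) (I : Type) (P : I -> K -> Prop)
  (Hne : forall i, exists x, P i x)
  (Hconv : forall i x y a, P i x -> P i y -> in_O le nu a -> P i ((1 - a) * x + a * y))
  (Hnest : nested P) : exists z, forall i, P i z.
Proof.
case: (classic (exists i0, forall i, subset_of (P i0) (P i))) => [[i0 Hi0]|Hno].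
  by case: (Hne i0) => z hz; exists z => i; exact: Hi0.
have Hstep : forall i, exists j y, subset_of (P j) (P i) /\ P i y /\ ~ P j y.
  move=> i; apply: NNPP => Hn; apply: Hno; exists i => j.
  case: (Hnest i j) => // Hji y Py; apply: NNPP => nPy; apply: Hn.
  by exists j, y.
pose J := {cr : K * G | exists i, subset_of (P i) (closed_ball le nu cr.1 cr.2)}.
have [] := Hsc J (fun j : J => closed_ball le nu (sval j).1 (sval j).2).
- move=> j; exists (sval j).1, (sval j).2; by left.
- move=> [[c r] [i Hi]] [[c' r'] [i' Hi']] /=.
  case: (Hnest i i') => Hs.
    case: (Hne i) => w Pw; apply: (ball_nest (w := w)); [exact: Hi|exact: Hi' (Hs _ Pw)].
  case: (Hne i') => w Pw; apply: (ball_nest (w := w)); [exact: Hi (Hs _ Pw)|exact: Hi'].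
move=> z Hz; exists z => i.
case: (Hstep i) => j [y [Hji [Py nPy]]]; case: (Hne j) => x Px.
have yx : y - x != 0.
  by rewrite subr_eq0; apply/eqP => E; apply: nPy; rewrite E.
case E: (nu (y - x)) => [g|]; last by move: E => /(nu_inf Hnu) /eqP; rewrite (negbTE yx).
have Hball : subset_of (P j) (closed_ball le nu x g).
  move=> w Pw; rewrite /closed_ball.
  case Enw: (nu (w - x)) => [g'|] //=.
  case: (boolP (le g g')) => // ngg'.
  have lg'g : le g' g by case/orP: (le_total Hnu g g') => // h; rewrite h in ngg'.
  have wx : w - x != 0.
    by apply/eqP => /(nu_inf Hnu); rewrite Enw.
  pose a := (y - x) / (w - x).
  have ha : a * (w - x) = y - x by rewrite /a mulfVK.
  have ya : y = (1 - a) * x + a * w.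
    have -> : (1 - a) * x + a * w = x + a * (w - x) by ring.
    by rewrite ha addrC subrK.
  have Oa : in_O le nu a.
    have := nu_mul Hnu a (w - x); rewrite ha E Enw /in_O.
    case: (nu a) => [e|] //= [] hg; move: lg'g; rewrite hg; exact: le_cancel.
  by exfalso; apply: nPy; rewrite ya; apply: Hconv.
have := Hz (exist _ (x, g) (ex_intro _ j Hball)); rewrite /= /closed_ball => hz.
pose a := (z - x) / (y - x).
have ha : a * (y - x) = z - x by rewrite /a mulfVK.
have za : z = (1 - a) * x + a * y.
  have -> : (1 - a) * x + a * y = x + a * (y - x) by ring.
  by rewrite ha addrC subrK.
have Oa : in_O le nu a.
  apply: (inO_of (g := g) (z := z - x)) => //.
  by rewrite -ha (nu_mul Hnu) E.
by rewrite za; apply: Hconv => //; apply: Hji.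
Qed.

Lemma convex2 d (X : 'rV[K]_d -> Prop) : convex le nu X ->
  forall x y a, X x -> X y -> in_O le nu a -> X ((1 - a) *: x + a *: y).
Proof.
move=> HX x y a hx hy ha.
have := HX 2%N (fun i => if val i == 0%N then x else y)
  (fun i => if val i == 0%N then 1 - a else a).
rewrite !big_ord_recr !big_ord0 /= !add0r; apply.
- by case=> [[|[|m]] ?].
- by case=> [[|[|m]] ?] //=; apply: inO1B.
- by rewrite subrK.
Qed.

Lemma convex_fiber d (X : 'rV[K]_d -> Prop) (j : 'I_d) t : convex le nu X ->
  convex le nu (fun x : 'rV[K]_d => X x /\ x ord0 j = t).
Proof.
move=> HX n x al hx ha hs; split.
  by apply: HX => // i; case: (hx i).
rewrite summxE.
under eq_bigr => k _ do rewrite mxE (proj2 (hx k)).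
by rewrite -big_distrl /= hs mul1r.
Qed.

Lemma mainP (Hsc : spherically_complete le nu) d (n : nat) : forall (I : Type) (C : I -> 'rV[K]_d -> Prop),
  (forall i, exists x, C i x) -> (forall i, convex le nu (C i)) -> nested C ->
  (forall i i' x y (j : 'I_d), (n <= j)%N -> C i x -> C i' y -> x ord0 j = y ord0 j) ->
  exists x, forall i, C i x.
Proof.
elim: n => [|n IH] I C Hne Hconv Hnest Hag.
  case: (classic (exists i : I, True)) => [[i0 _]|nI]; last first.
    by exists 0 => i; exfalso; apply: nI; exists i.
  case: (Hne i0) => x0 hx0; exists x0 => i.
  case: (Hne i) => y hy.
  have -> : x0 = y by apply/rowP => j; exact: (Hag i0 i).
  done.
case: (ltnP n d) => hn; last first.
  apply: IH => // i i' x y j hj; apply: Hag.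
  by have := ltn_ord j; rewrite ltnNge (leq_trans hn hj).
pose j := Ordinal hn.
pose P i s := exists x, C i x /\ x ord0 j = s.
have [t Ht] : exists t, forall i, P i t.
  apply: core1 => //.
  - by move=> i; case: (Hne i) => x hx; exists (x ord0 j), x.
  - move=> i s1 s2 a [x1 [h1 <-]] [x2 [h2 <-]] ha.
    exists ((1 - a) *: x1 + a *: x2); split; first exact: convex2.
    by rewrite !mxE.
  - move=> i i'; case: (Hnest i i') => Hs; [left|right];
      by move=> s [x [hx <-]]; exists x; split => //; apply: Hs.
have [x Hx] : exists x, forall i, C i x /\ x ord0 j = t.
  apply: (IH I (fun i x => C i x /\ x ord0 j = t)).
- by move=> i; case: (Ht i) => x [hx hxt]; exists x.
- by move=> i; apply: convex_fiber.
- move=> i i'; case: (Hnest i i') => Hs; [left|right];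
    by move=> x [hx hxt]; split => //; apply: Hs.
- move=> i i' x y k hk [hx hxt] [hy hyt].
  case: (eqVneq (val k) n) => hkn.
    have -> : k = j by apply: val_inj.
    by rewrite hxt hyt.
  by apply: (Hag i i'); rewrite // ltn_neqAle eq_sym hkn hk.
by exists x => i; case: (Hx i).
Qed.

End S.

Theorem lemma3p4 (K : fieldType) (G : zmodType) (le : rel G) (nu : K -> option G)
  (Hnu : is_valuation le nu) (Hsc : spherically_complete le nu)
  (d : nat) (Hd : (1 <= d)%N)
  (I : Type) (C : I -> 'rV[K]_d -> Prop)
  (Hne : forall i, exists x, C i x)
  (Hconv : forall i, convex le nu (C i))
  (Hnest : nested C) :
  exists x, forall i, C i x.
Proof.
apply: (mainP Hnu Hsc (n := d)) => // i i' x y j hj.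
by have := ltn_ord j; rewrite ltnNge hj.
Qed.
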